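(* Let $(\Omega,\mathcal{F},\mathbb{P})$ be a nonatomic probability space, let $u:\mathbb{R}\to\mathbb{R}\cup\{-\infty\}$ be a utility function bounded from above, let $\alpha\in\mathbb{R}$ be such that $u(x)\ge\alpha$ for some $x\in\mathbb{R}$, and let $\mathcal{A}_u^\infty=\{X\in L^\infty:\mathbb{E}[u(X)]\ge\alpha\}$. Assume that either $u(x)\le\alpha$ for all $x\in\mathbb{R}$ or that $u$ attains the value $-\infty$. Then, for any traded asset $S=(S_0,S_T)$ with $S_T\in L^\infty$ such that $\rho_{\mathcal{A}_u^\infty,S}$ is finite-valued on $L^\infty$, we have $\mathrm{Index}_{\mathrm{fin}}(\rho_{\mathcal{A}_u^\infty,S})=\infty$.
   Context: A utility function is a nonconstant, increasing, concave function $u:\mathbb{R}\to\mathbb{R}\cup\{-\infty\}$. A traded asset is $S=(S_0,S_T)$ with $S_0>0$, $S_T\ge0$ a.s., $S_T\ne0$. For $\mathcal{B}\subset L^\infty$, $\rho_{\mathcal{B},S}(X)=\inf\{m\in\mathbb{R}:X+\frac{m}{S_0}S_T\in\mathcal{B}\}$. For a convex, law-invariant acceptance set $\mathcal{A}\subset L^\infty$ (nonempty proper, $\mathcal{A}+L^\infty_+\subset\mathcal{A}$, closed under equality in law) with $\rho_{\mathcal{A},S}$ finite-valued on $L^\infty$, the index of finiteness is $\mathrm{Index}_{\mathrm{fin}}(\rho_{\mathcal{A},S})=\inf\{p\in[1,\infty):\mathrm{Cl}_p(\mathcal{A})\text{ has nonempty interior in }L^p\}$, where $\mathrm{Cl}_p(\mathcal{A})$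 is the closure of $\mathcal{A}$ in $L^p$ and $\inf\emptyset=\infty$. *)

(* Defs.v *)
From HB Require Import structures.
From mathcomp Require Import all_boot all_order all_algebra.
From mathcomp Require Import all_classical all_reals all_analysis.
Set Implicit Arguments. Unset Strict Implicit. Unset Printing Implicit Defensive.
Import Order.TTheory GRing.Theory Num.Theory.
Local Open Scope classical_set_scope.
Local Open Scope ring_scope.

Definition nonatomic d (T : measurableType d) (R : realType)
    (P : probability T R) : Prop :=
  forall A : set T, measurable A -> (0 < P A)%E ->
    exists B : set T, [/\ measurable B, B `<=` A & (0 < P B < P A)%E].

Definition utility (R : realType) (u : R -> \bar R) : Prop :=
  [/\ (forall x, u x != +oo%E),
      (exists x y, u x != u y),
      (forall x y, x <= y -> (u x <= u y)%E) &
      (forall (x y l : R), (0 < l)%R /\ (l < 1)%R ->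
         (l%:E * u x + (1 - l)%R%:E * u y <= u (l * x + (1 - l) * y)%R)%E)].

(* L^p as a set of (representatives) real random variables, p in [1,+oo]. *)
Definition Lp d (T : measurableType d) (R : realType)
    (P : probability T R) (p : \bar R) : set (T -> R) :=
  [set X | measurable_fun setT X /\ finite_norm P p X].

Definition acc_u d (T : measurableType d) (R : realType)
    (P : probability T R) (u : R -> \bar R) (alpha : R) : set (T -> R) :=
  [set X | Lp P +oo%E X /\ (alpha%:E <= \int[P]_w u (X w))%E].

Definition traded_asset d (T : measurableType d) (R : realType)
    (P : probability T R) (S0 : R) (ST : T -> R) : Prop :=
  [/\ 0 < S0, measurable_fun setT ST,
      (\forall w \ae P, 0 <= ST w) & ~ (\forall w \ae P, ST w = 0)].

Definition rho d (T : measurableType d) (R : realType)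
    (B : set (T -> R)) (S0 : R) (ST : T -> R) (X : T -> R) : \bar R :=
  ereal_inf [set m%:E | m in [set m : R | B (fun w => X w + m / S0 * ST w)]].

Definition rho_finite_on_Linf d (T : measurableType d) (R : realType)
    (P : probability T R) (B : set (T -> R)) (S0 : R) (ST : T -> R) : Prop :=
  forall X, Lp P +oo%E X -> rho B S0 ST X \is a fin_num.

Definition Clp d (T : measurableType d) (R : realType)
    (P : probability T R) (p : \bar R) (B : set (T -> R)) : set (T -> R) :=
  [set X | Lp P p X /\ forall e : R, 0 < e ->
     exists Y, B Y /\ ('N[P]_p[EFin \o (X \- Y)%R] < e%:E)%E].

Definition nonempty_interior_Lp d (T : measurableType d) (R : realType)
    (P : probability T R) (p : \bar R) (C : set (T -> R)) : Prop :=
  exists X, Lp P p X /\ exists e : R, 0 < e /\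
    forall Y, Lp P p Y -> ('N[P]_p[EFin \o (Y \- X)%R] < e%:E)%E -> C Y.

Definition Index_fin d (T : measurableType d) (R : realType)
    (P : probability T R) (B : set (T -> R)) : \bar R :=
  ereal_inf [set p%:E | p in
    [set p : R | 1 <= p /\ nonempty_interior_Lp P p%:E (Clp P p%:E B)]].

(* Main.v *)
Require Import Defs.
From HB Require Import structures.
From mathcomp Require Import all_boot all_order all_algebra.
From mathcomp Require Import all_classical all_reals all_analysis.
From mathcomp Require Import lra.
Import Order.TTheory GRing.Theory Num.Theory.
Local Open Scope classical_set_scope.
Local Open Scope ring_scope.

Section aux.
Context d (T : measurableType d) (R : realType).
Local Open Scope ereal_scope.

Lemma nn_le_integral (mu : {measure set T -> \bar R}) (f g : T -> \bar R) :
  (forall x, 0 <= f x) -> (forall x, f x <= g x) ->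
  \int[mu]_x f x <= \int[mu]_x g x.
Proof.
move=> f0 fg.
have g0 x : 0 <= g x by apply: le_trans (f0 x) (fg x).
rewrite !ge0_integralTE//.
apply: ereal_sup_le => _ [h hf <-]; exists h => //= x.
exact: le_trans (hf x) (fg x).
Qed.

Lemma gen_le_integral (mu : {measure set T -> \bar R}) (f g : T -> \bar R) :
  (forall x, f x <= g x) -> \int[mu]_x f x <= \int[mu]_x g x.
Proof.
move=> fg; rewrite (integralE _ _ f) (integralE _ _ g).
apply: leeB; apply: nn_le_integral.
- by move=> x; rewrite funeposE le_max lexx orbT.
- by move=> x; apply: (@funepos_le _ _ setT) => //; rewrite inE.
- by move=> x; rewrite funenegE le_max lexx orbT.
- by move=> x; apply: (@funeneg_le _ _ setT) => //; rewrite inE.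
Qed.
End aux.
Lemma step_integral d (T : measurableType d) (R : realType)
  (P : probability T R) (F : set T) (M v : R) : measurable F ->
  (\int[P]_x ((M + (v - M) * \1_F x)%:E) = M%:E + (v - M)%:E * P F)%E.
Proof.
move=> mF.
have iM : P.-integrable setT (EFin \o cst M).
  exact: finite_measure_integrable_cst.
have iI : P.-integrable setT (EFin \o (fun x => (v - M) * \1_F x)).
  apply: (@eq_integrable _ _ _ _ _ _ (fun x => ((v - M)%:E * (\1_F x)%:E)%E)) ; first exact: measurableT.
    by move=> x _.
  by apply/integrableZl/integrable_indic.
rewrite (_ : (fun x => (M + (v - M) * \1_F x)%R%:E) =
   (EFin \o cst M \+ EFin \o (fun x => (v - M) * \1_F x)%R)%E); last first.
  by apply/funext => x.
rewrite integralD_EFin//.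
rewrite (_ : (\int[P]_x (EFin \o cst M) x = \int[P]_x (cst M%:E) x)%E)//.
rewrite integral_cst//.
lazymatch goal with |- context [(M%:E * ?X)%E] =>
  have -> : X = 1%E by exact: probability_setT end.
rewrite mule1.
rewrite (_ : (\int[P]_x (EFin \o (fun x => (v - M) * \1_F x)%R) x =
   \int[P]_x ((v - M)%:E * (\1_F x)%:E))%E); last first.
  by apply: eq_integral => x _.
rewrite integralZl//; last exact: integrable_indic.
rewrite integral_indic// setIT.
reflexivity.
Qed.
Lemma meas_le d (T : measurableType d) (R : realType) (Z : T -> R) (c : R) :
  measurable_fun setT Z -> measurable [set w | Z w <= c].
Proof.
move=> mZ; have := mZ measurableT _ (measurable_itv `]-oo, c]).
rewrite setTI; congr measurable; apply/seteqP; split => w /=;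
  by rewrite in_itv /=.
Qed.

Lemma choose_v (R : realType) (u : R -> \bar R) (alpha : R) :
  utility u ->
  (exists M : R, forall x, (u x <= M%:E)%E) ->
  (exists x, (alpha%:E <= u x)%E) ->
  ((forall x, (u x <= alpha%:E)%E) \/ (exists x, u x = -oo%E)) ->
  exists x1 M', (forall x, (u x <= M'%:E)%E) /\
    forall q, 0 < q -> q <= 1 ->
      exists v, (u x1 <= v%:E)%E /\ M' + (v - M') * q < alpha.
Proof.
move=> [uny [x [y uxy]] umono _] [M uM] [x0 ux0] [ule|[x1 ux1]].
- have ex1 : exists x1, u x1 != alpha%:E.
    case: (eqVneq (u x) alpha%:E) => hx; last by exists x.
    by exists y; rewrite -hx eq_sym.
  case: ex1 => x1 hx1.
  have lt1 : (u x1 < alpha%:E)%E by rewrite lt_neqAle hx1 ule.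
  exists x1, alpha; split => // q q0 q1.
  move: lt1 (uny x1); case: (u x1) => [r| |] //.
  + rewrite lte_fin => ra _; exists r; split => //.
    nra.
  + move=> _ _; exists (alpha - 1); split; first by rewrite leNye.
    nra.
- exists x1, M; split => // q q0 q1.
  exists ((alpha - `|M| - 1) / q); split; first by rewrite ux1 leNye.
  have e : (alpha - `|M| - 1) / q * q = alpha - `|M| - 1.
    by rewrite divfK // gt_eqF.
  have h1 : M <= `|M| := ler_norm M.
  have h2 : - M <= `|M| by rewrite -normrN ler_norm.
  nra.
Qed.

Lemma acc_null d (T : measurableType d) (R : realType) (P : probability T R)
  (u : R -> \bar R) (alpha : R) :
  utility u ->
  (exists M : R, forall x, (u x <= M%:E)%E) ->
  (exists x, (alpha%:E <= u x)%E) ->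
  ((forall x, (u x <= alpha%:E)%E) \/ (exists x, u x = -oo%E)) ->
  exists c : R, forall Z, acc_u P u alpha Z -> P [set w | Z w <= c] = 0%E.
Proof.
move=> uu hM hx hc.
have [x1 [M' [uM hv]]] := choose_v _ _ _ uu hM hx hc.
case: uu => _ _ umono _.
exists x1 => Z [[mZ _] hZ].
set F := [set w | Z w <= x1].
have mF : measurable F by exact: meas_le.
apply/eqP; rewrite eq_le measure_ge0 andbT; apply/negP => /negP.
rewrite -ltNge => PF0.
have PF1 : (P F <= 1)%E by exact: probability_le1.
have finF : P F \is a fin_num by exact: fin_num_measure.
set q := fine (P F).
have q0 : 0 < q by apply: fine_gt0; rewrite PF0 (le_lt_trans PF1)// ltry.
have q1 : q <= 1 by rewrite -lee_fin fineK.
have [v [uv hlt]] := hv q q0 q1.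
have : (\int[P]_w u (Z w) <= \int[P]_w ((M' + (v - M') * \1_F w)%R%:E))%E.
  apply: gen_le_integral => w; rewrite indicE.
  case: (boolP (w \in F)) => wF.
  - rewrite mulr1 addrC subrK; apply: le_trans (umono _ _ _) uv.
    by move: wF; rewrite inE.
  - by rewrite mulr0 addr0.
rewrite step_integral// => hle.
have := le_trans hZ hle.
have -> : ((M'%:E + (v - M')%:E * P F) = (M' + (v - M') * q)%:E)%E.
  by rewrite /q [in RHS]EFinD [in RHS]EFinM fineK.
by rewrite lee_fin leNgt hlt.
Qed.

Section small.
Context d (T : measurableType d) (R : realType) (P : probability T R).

Lemma PfK (B : set T) : measurable B -> P B = (fine (P B))%:E.
Proof. by move=> mB; rewrite fineK//; exact: fin_num_measure. Qed.

Lemma small_step (A : set T) : nonatomic P -> measurable A -> (0 < P A)%E ->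
  forall n : nat,
  exists E, [/\ measurable E, E `<=` A, 0 < fine (P E) &
    fine (P E) <= (2^-1) ^+ n].
Proof.
move=> nA mA PA0; elim=> [|n [E [mE sEA PE0 PEn]]].
  exists A; split => //.
    by rewrite -lte_fin -PfK.
  by rewrite expr0 -lee_fin -PfK//; exact: probability_le1.
have PE0' : (0 < P E)%E by rewrite PfK// lte_fin.
have [B [mB sBE /andP[PB0 PBE]]] := nA E mE PE0'.
set C := E `\` B.
have mC : measurable C by exact: measurableD.
have UE : B `|` C = E by rewrite /C setDUK.
have IBC : B `&` C = set0.
  by apply/seteqP; split => w //= [wB [_ wnB]].
have PEBC : P E = (P B + P C)%E.
  by rewrite -UE measureU.
have hE : fine (P E) = fine (P B) + fine (P C).
  rewrite PEBC fineD//; exact: fin_num_measure.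
have hB0 : 0 < fine (P B) by rewrite -lte_fin -PfK.
have hBE : fine (P B) < fine (P E) by rewrite -lte_fin -!PfK.
case: (leP (fine (P B)) ((2^-1) ^+ n.+1)) => hb.
  by exists B; split => //; apply: subset_trans sBE sEA.
exists C; split => //.
- by apply: subset_trans sEA => w [].
- lra.
- move: hb; rewrite exprSr => hb. lra.
Qed.
Lemma small_set (A : set T) (eps : R) : nonatomic P -> measurable A ->
  (0 < P A)%E -> 0 < eps ->
  exists E, [/\ measurable E, E `<=` A, 0 < fine (P E) & fine (P E) < eps].
Proof.
move=> nA mA PA0 eps0.
set n := Num.truncn (eps^-1).
have [E [mE sEA PE0 PEn]] := small_step A nA mA PA0 n.
exists E; split => //.
have h1 : eps^-1 < n.+1%:R by exact: truncnS_gt.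
have h2 : (n.+1%:R : R) <= 2 ^+ n.
  by rewrite -natrX ler_nat; exact: ltn_expl.
have h3 : (2^-1 : R) ^+ n = (2 ^+ n)^-1 by rewrite exprVn.
have h4 : (2 ^+ n : R)^-1 <= (n.+1%:R)^-1.
  by rewrite lef_pV2 ?posrE ?exprn_gt0 ?ltr0n.
have h5 : (n.+1%:R : R)^-1 < eps.
  rewrite -[eps]invrK ltf_pV2 ?posrE ?invr_gt0 ?ltr0n//.
apply: le_lt_trans PEn _; rewrite h3; exact: le_lt_trans h4 h5.
Qed.
Lemma bounded_pos (X : T -> R) : measurable_fun setT X ->
  exists N : R, (0 < P [set w | (X w <= N)%R])%E.
Proof.
move=> mX; apply: contrapT => hn.
have h0 (m : nat) : P [set w | X w <= m%:R] = 0%E.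
  apply/eqP; rewrite eq_le measure_ge0 andbT leNgt; apply/negP => h.
  by apply: hn; exists m%:R.
have neg : P.-negligible (\bigcup_m [set w | X w <= m%:R]).
  apply: negligible_bigcup => m.
  exists [set w | X w <= m%:R]; split => //.
  exact: (@meas_le d T R X m%:R mX). exact: h0.
have negT : P.-negligible setT.
  apply: negligibleS neg => w _.
  exists (Num.truncn `|X w|).+1 => //=.
  apply: le_trans (ler_norm (X w)) _; apply/ltW; exact: truncnS_gt.
have hT := measure_negligible measurableT negT.
have h1 : P setT = 1%E by exact: probability_setT.
have : (1 = 0 :> \bar R)%E by rewrite -h1; exact: hT.
by move=> /eqP; rewrite onee_eq0.
Qed.
End small.
Section L5.
Context d (T : measurableType d) (R : realType) (P : probability T R).

Lemma Lnorm_kE (k p : R) (E : set T) : 0 < k -> 0 < p -> measurable E ->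
  (('N[P]_p%:E[EFin \o (fun w => k * \1_E w)%R]) `^ p =
    (k `^ p)%:E * P E)%E.
Proof.
move=> k0 p0 mE; rewrite poweR_Lnorm ?gt_eqF//.
under eq_integral => w _.
  rewrite (_ : (`|(EFin \o (fun w => k * \1_E w)%R) w| `^ p =
     ((k `^ p) * \1_E w)%R%:E)%E); last first.
    rewrite /= indicE; case: (w \in E).
      by rewrite mulr1 mulr1 gtr0_norm.
    have -> : (false%:R : R) = 0 by [].
    by rewrite !mulr0 normr0 powR0 ?gt_eqF.
  over.
rewrite (@integralZl_indic _ _ _ _ _ measurableT (fun _ => E)) //.
  by rewrite integral_indic// setIT.
move=> h; exfalso; move: h; rewrite ltNge => /negP; apply.
exact: powR_ge0.
Qed.

Lemma noint (A : set (T -> R)) (c p : R) : nonatomic P -> 1 <= p ->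
  (forall Z, A Z -> measurable_fun setT Z /\ P [set w | Z w <= c] = 0%E) ->
  ~ nonempty_interior_Lp P p%:E (Clp P p%:E A).
Proof.
move=> nA p1 hA [X [[mX fX] [e [e0 H]]]].
have p0 : 0 < p by lra.
have [N PN] := @bounded_pos _ _ _ P X mX.
pose k : R := `|N - c| + 1.
have k0 : 0 < k by rewrite /k; have := normr_ge0 (N - c); lra.
have kp0 : 0 < k `^ p by exact: powR_gt0.
have ep0 : 0 < e `^ p by exact: powR_gt0.
have mXN : measurable [set w | (X w <= N)%R] by exact: meas_le.
have [E [mE sE PE0 PEr]] := @small_set _ _ _ P _ _ nA mXN PN (divr_gt0 ep0 kp0).
set kE := (fun w => k * \1_E w)%R.
have mkE : measurable_fun setT kE.
  by apply: measurable_realfun.measurable_funM => //.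
have hG : ('N[P]_p%:E[EFin \o kE] < e%:E)%E.
  rewrite ltNge; apply/negP => he.
  have : ((e%:E) `^ p <= ('N[P]_p%:E[EFin \o kE]) `^ p)%E.
    apply: gt0_ler_poweR => //; first exact: ltW.
      by rewrite in_itv /= lee_fin (ltW e0) leey.
    by rewrite in_itv /= Lnorm_ge0 leey.
  rewrite Lnorm_kE // poweR_EFin (@PfK _ _ _ P _ mE) -EFinM lee_fin.
  have : k `^ p * fine (P E) < k `^ p * (e `^ p / k `^ p).
    by rewrite ltr_pM2l.
  rewrite mulrCA divff ?gt_eqF // mulr1.
  lra.
pose Y : T -> R := (fun w => X w - kE w)%R.
have mY : measurable_fun setT Y.
  exact: measurable_realfun.measurable_funB.
have eqNk : ('N[P]_p%:E[EFin \o (fun w => - kE w)%R] =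
    'N[P]_p%:E[EFin \o kE])%E.
  rewrite -[RHS]oppe_Lnorm; apply: eq_Lnorm => w /=.
  by rewrite EFinN.
have LY : Lp P p%:E Y.
  split => //; rewrite /finite_norm.
  have -> : ('N[P]_p%:E[EFin \o Y] =
    'N[P]_p%:E[((EFin \o X) \+ (EFin \o (fun w => - kE w)%R))%E])%E.
    by apply: eq_Lnorm => w /=; rewrite EFinD EFinN.
  apply: le_lt_trans (eminkowski _ _ _ _) _.
  - exact: mX.
  - by apply: measurableT_comp => //; exact: measurable_realfun.oppr_measurable.
  - by rewrite lee_fin.
  - rewrite eqNk; apply: lte_add_pinfty => //.
    exact: lt_trans hG (ltry _).
have dYX : ('N[P]_p%:E[EFin \o (Y \- X)%R] < e%:E)%E.
  have -> : ('N[P]_p%:E[EFin \o (Y \- X)%R] =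
      'N[P]_p%:E[EFin \o (fun w => - kE w)%R])%E.
    by apply: eq_Lnorm => w /=; rewrite /Y addrAC subrr add0r.
  by rewrite eqNk.
have [_ hcl] := H Y LY dYX.
pose e' := fine (P E) `^ p^-1.
have e'0 : 0 < e' by exact: powR_gt0.
have [Z [AZ hZ]] := hcl e' e'0.
have [mZ PZ] := hA Z AZ.
set Zc := [set w | Z w <= c].
have mZc : measurable Zc by exact: meas_le.
set E' := E `\` Zc.
have mE' : measurable E' by exact: measurableD.
have PEE' : (P E <= P E')%E.
  have sub : E `<=` E' `|` Zc.
    move=> w Ew; case: (boolP (Z w <= c)) => h; first by right.
    by left; split => //; apply/negP.
  apply: le_trans (le_measure _ _ _ sub) _; rewrite ?inE//.
    exact: measurableU.
  apply: le_trans (measureU2 _ mE' mZc) _.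
  rewrite -[leRHS]adde0; apply: leeD => //.
  by rewrite le_eqVlt; apply/orP; left; apply/eqP; exact: PZ.
set G := 'N[P]_p%:E[EFin \o (Y \- Z)%R]%E.
have hint : (P E' <= G `^ p)%E.
  rewrite /G poweR_Lnorm ?gt_eqF//.
  have := @nn_le_integral _ _ _ P (fun w => (\1_E' w)%:E)
     (fun w => `|(EFin \o (Y \- Z)%R) w| `^ p)%E.
  rewrite integral_indic// setIT; apply.
    by move=> w; rewrite lee_fin.
  move=> w; rewrite indicE; case: (boolP (w \in E')) => h; last first.
    exact: poweR_ge0.
  move: h; rewrite inE => -[Ew nZw].
  have XN : X w <= N by exact: sE.
  have Zcw : c < Z w by rewrite ltNge; apply/negP.
  have Yw : Y w = X w - k.
    by rewrite /Y /kE indicE (_ : w \in E) ?mulr1// inE.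
  have hk : N - c <= `|N - c| := ler_norm _.
  have a1 : 1 <= `|Y w - Z w|.
    rewrite ler0_norm; last by rewrite Yw /k; lra.
    rewrite Yw /k; lra.
  rewrite /= lee_fin.
  exact: le_trans a1 (le1r_powR a1 p1).
have : ((P E) `^ p^-1 <= G)%E.
  have G0 : (0 <= G)%E by exact: Lnorm_ge0.
  have : ((P E) `^ p^-1 <= (G `^ p) `^ p^-1)%E.
    apply: gt0_ler_poweR.
    - by rewrite invr_ge0 ltW.
    - by rewrite in_itv /= measure_ge0 leey.
    - by rewrite in_itv /= poweR_ge0 leey.
    - exact: le_trans PEE' hint.
  by rewrite -poweRrM mulfV ?gt_eqF// poweRe1.
rewrite (@PfK _ _ _ P _ mE) poweR_EFin -/e' => hle.
by have := lt_le_trans hZ hle; rewrite ltxx.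
Qed.
End L5.

Theorem corollary6p4 (d : measure_display) (T : measurableType d)
    (R : realType) (P : probability T R) (u : R -> \bar R) (alpha : R)
    (S0 : R) (ST : T -> R) :
  nonatomic P ->
  utility u ->
  (exists M : R, forall x, (u x <= M%:E)%E) ->
  (exists x, (alpha%:E <= u x)%E) ->
  ((forall x, (u x <= alpha%:E)%E) \/ (exists x, u x = -oo%E)) ->
  traded_asset P S0 ST ->
  Lp P +oo%E ST ->
  rho_finite_on_Linf P (acc_u P u alpha) S0 ST ->
  Index_fin P (acc_u P u alpha) = +oo%E.
Proof.
move=> nA uu hM hx hc _ _ _.
have [c hc'] := @acc_null _ _ _ P u alpha uu hM hx hc.
rewrite /Index_fin.
have -> : [set p%:E | p in [set p : R | 1 <= p /\
    nonempty_interior_Lp P p%:E (Clp P p%:E (acc_u P u alpha))]] = set0.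
  apply/seteqP; split => // x [p [p1 hint] _].
  apply: (@noint _ _ _ P _ c p nA p1 _ hint) => Z AZ.
  split; last exact: hc'.
  by case: AZ => -[].
exact: ereal_inf0.
Qed.
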